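(* Let $0<q<1$ and let $\lambda$ be a partition with at most $n$ parts. Writing $x=(x_1,\dots,x_n)=(q^{u_1},\dots,q^{u_n})$, the function $u\mapsto W_\lambda(q^{u_1},\dots,q^{u_n};q,p,t,a,b)$ is elliptic in each variable $u_i$; that is, for each $i$ it is invariant under $u_i\mapsto u_i+2\pi\sqrt{-1}/\log q$ and under $u_i\mapsto u_i+\log p/\log q$ (the latter meaning $x_i\mapsto px_i$).
   Context: Fix $p\in\mathbb{C}$ with $0<|p|<1$; parameters generic. $E(x)=(x;p)_\infty(p/x;p)_\infty$. For integer $m\ge0$, $(a)_m=\prod_{k=0}^{m-1}E(aq^k)$, for $m<0$, $(a)_m=1/(aq^m)_{-m}$; for a partition $\lambda$ with $n$ parts $(a)_\lambda=\prod_{i=1}^n(at^{1-i})_{\lambda_i}$; several arguments denote products; integer subscripts denote the single-integer symbol. For $n$-part partitions with $\lambda_1\ge\mu_1\ge\dots\ge\lambda_n\ge\mu_n$, $\lambda_{n+1}=\mu_{n+1}=0$, $H_{\lambda/\mu}(q,p,t,b)=\prod_{1\le i<j\le n}\Big\{\frac{(q^{\mu_i-\mu_{j-1}}t^{j-i})_{\mu_{j-1}-\lambda_j}(q^{\lambda_i+\lambda_j}t^{3-j-i}b)_{\mu_{j-1}-\lambda_j}}{(q^{\mu_i-\mu_{j-1}+1}t^{j-i-1})_{\mu_{j-1}-\lambda_j}(q^{\lambda_i+\lambda_j+1}t^{2-j-i}b)_{\mu_{j-1}-\lambda_j}}\frac{(q^{\lambda_i-\mu_{j-1}+1}t^{j-i-1})_{\mu_{j-1}-\lambda_j}}{(q^{\lambda_i-\mu_{j-1}}t^{j-i})_{\mu_{j-1}-\lambda_j}}\Big\}\prod_{1\le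 i<j-1\le n}\frac{(q^{\mu_i+\lambda_j+1}t^{1-j-i}b)_{\mu_{j-1}-\lambda_j}}{(q^{\mu_i+\lambda_j}t^{2-j-i}b)_{\mu_{j-1}-\lambda_j}}$; for $x\in\mathbb{C}$, $W_{\lambda/\mu}(x;q,p,t,a,b)=H_{\lambda/\mu}\frac{(x^{-1},ax)_\lambda(qbx/t,qb/(axt))_\mu}{(x^{-1},ax)_\mu(qbx,qb/(ax))_\lambda}\prod_{i=1}^n\frac{E(bt^{1-2i}q^{2\mu_i})}{E(bt^{1-2i})}\frac{(bt^{1-2i})_{\mu_i+\lambda_{i+1}}}{(bqt^{-2i})_{\mu_i+\lambda_{i+1}}}t^{i(\mu_i-\lambda_{i+1})}$ (zero if the interlacing fails); recursively $W_{\lambda/\mu}(y,z_1,\dots,z_\ell;q,p,t,a,b)=\sum_\nu W_{\lambda/\nu}(yt^{-\ell};q,p,t,at^{2\ell},bt^\ell)W_{\nu/\mu}(z_1,\dots,z_\ell;q,p,t,a,b)$ over $\nu$ with $\lambda_1\ge\nu_1\ge\dots\ge\lambda_n\ge\nu_n\ge0$; $W_\lambda=W_{\lambda/0}$. *)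

(* Defs.v *)
From Stdlib Require Import Reals ZArith List Lia Bool.
From Coquelicot Require Import Coquelicot.
Import ListNotations.
Open Scope C_scope.

Definition C0 : C := RtoC 0%R.
Definition C1 : C := RtoC 1%R.

Definition Cexp (z : C) : C :=
  (exp (fst z) * cos (snd z), exp (fst z) * sin (snd z))%R.

Definition cpowZ (z : C) (k : Z) : C :=
  match k with
  | Z0 => C1
  | Zpos n => Cpow z (Pos.to_nat n)
  | Zneg n => Cinv (Cpow z (Pos.to_nat n))
  end.

Arguments cpowZ z k%_Z_scope.

Definition cprod (l : list nat) (f : nat -> C) : C :=
  fold_right (fun i acc => f i * acc) C1 l.
Definition csum {A} (l : list A) (f : A -> C) : C :=
  fold_right (fun x acc => f x + acc) C0 l.

Definition partial_prod (f : nat -> C) (N : nat) : C := cprod (seq 0 N) f.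
Definition inf_prod (f : nat -> C) : C :=
  (real (Lim_seq (fun N => fst (partial_prod f N))),
   real (Lim_seq (fun N => snd (partial_prod f N)))).

Definition qpoch_inf (p x : C) : C := inf_prod (fun k => C1 - x * Cpow p k).

Definition Eth (p x : C) : C := qpoch_inf p x * qpoch_inf p (p / x).

Definition ellpoch (q p a : C) (m : Z) : C :=
  match m with
  | Z0 => C1
  | Zpos k => cprod (seq 0 (Pos.to_nat k)) (fun j => Eth p (a * Cpow q j))
  | Zneg k => Cinv (cprod (seq 0 (Pos.to_nat k))
                          (fun j => Eth p (a * cpowZ q (Zneg k) * Cpow q j)))
  end.

(* partitions with n parts are lists of length n; part i (1-based) *)
Definition part (l : list nat) (i : nat) : nat := nth (i - 1) l 0%nat.
Definition partZ (l : list nat) (i : nat) : Z := Z.of_nat (part l i).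

Definition ellpoch_part (q p t a : C) (l : list nat) : C :=
  cprod (seq 1 (length l))
    (fun i => ellpoch q p (a * cpowZ t (1 - Z.of_nat i)) (partZ l i)).

Definition is_partition (n : nat) (l : list nat) : Prop :=
  length l = n /\ forall i, (1 <= i < n)%nat -> (part l (S i) <= part l i)%nat.

Definition interlaces (l m : list nat) : bool :=
  Nat.eqb (length l) (length m) &&
  forallb (fun i => Nat.leb (part l (S i)) (part m i) && Nat.leb (part m i) (part l i))
          (seq 1 (length l)).

Definition H_fac (q p t b : C) (l m : list nat) : C :=
  let n := length l in
  let L := partZ l in let M := partZ m in
  let P c k := ellpoch q p c k in
  cprod (seq 1 n) (fun i => cprod (seq (S i) (n - i)) (fun j =>
    let iz := Z.of_nat i in let jz := Z.of_nat j in
    let s := (M (j - 1)%nat - L j)%Z in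
    (P (cpowZ q (M i - M (j-1)%nat) * cpowZ t (jz - iz)) s
      * P (cpowZ q (L i + L j) * cpowZ t (3 - jz - iz) * b) s)
    / (P (cpowZ q (M i - M (j-1)%nat + 1) * cpowZ t (jz - iz - 1)) s
      * P (cpowZ q (L i + L j + 1) * cpowZ t (2 - jz - iz) * b) s)
    * (P (cpowZ q (L i - M (j-1)%nat + 1) * cpowZ t (jz - iz - 1)) s
      / P (cpowZ q (L i - M (j-1)%nat) * cpowZ t (jz - iz)) s)))
  * cprod (seq 1 n) (fun i => cprod (seq (S (S i)) (n - i)) (fun j =>
    let iz := Z.of_nat i in let jz := Z.of_nat j in
    let s := (M (j - 1)%nat - L j)%Z in
    P (cpowZ q (M i + L j + 1) * cpowZ t (1 - jz - iz) * b) s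
    / P (cpowZ q (M i + L j) * cpowZ t (2 - jz - iz) * b) s)).

Definition W1 (q p t a b x : C) (l m : list nat) : C :=
  if interlaces l m then
    let n := length l in
    let PL c := ellpoch_part q p t c l in
    let PM c := ellpoch_part q p t c m in
    H_fac q p t b l m
    * (PL (/ x) * PL (a * x) * PM (q * b * x / t) * PM (q * b / (a * x * t)))
    / (PM (/ x) * PM (a * x) * PL (q * b * x) * PL (q * b / (a * x)))
    * cprod (seq 1 n) (fun i =>
        let iz := Z.of_nat i in
        let k := (partZ m i + partZ l (S i))%Z in
        Eth p (b * cpowZ t (1 - 2 * iz) * cpowZ q (2 * partZ m i))
          / Eth p (b * cpowZ t (1 - 2 * iz))
        * (ellpoch q p (b * cpowZ t (1 - 2 * iz)) k
           / ellpoch q p (b * q * cpowZ t (- 2 * iz)) k)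
        * cpowZ t (iz * (partZ m i - partZ l (S i))))
  else C0.

Fixpoint interlacing_below (l : list nat) : list (list nat) :=
  match l with
  | [] => [[]]
  | x :: rest =>
      let lo := match rest with [] => 0%nat | y :: _ => y end in
      flat_map (fun v => map (cons v) (interlacing_below rest)) (seq lo (S x - lo))
  end.

Fixpoint Wskew (q p t : C) (xs : list C) (a b : C) (l m : list nat) {struct xs} : C :=
  match xs with
  | [] => if list_eq_dec Nat.eq_dec l m then C1 else C0
  | [y] => W1 q p t a b y l m
  | y :: zs =>
      let ell := Z.of_nat (length zs) in
      csum (interlacing_below l) (fun nu =>
        W1 q p t (a * cpowZ t (2 * ell)) (b * cpowZ t ell) (y * cpowZ t (- ell)) l nu
        * Wskew q p t zs a b nu m)
  end.

Definition W (q p t a b : C) (xs : list C) (l : list nat) : C :=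
  Wskew q p t xs a b l (repeat 0%nat (length l)).

Definition qpowC (q : R) (u : C) : C := Cexp (u * RtoC (ln q)).

(* u with its i-th coordinate (0-based) shifted by s *)
Definition shift_at (u : nat -> C) (i : nat) (s : C) : nat -> C :=
  fun j => if Nat.eqb j i then u j + s else u j.

(* the variables x_j = q^{u_j}, j = 1..n (stored 0-based) *)
Definition xs_of (q : R) (n : nat) (u : nat -> C) : list C :=
  map (fun j => qpowC q (u j)) (seq 0 n).

(* Main.v *)
Require Import Defs.
From Stdlib Require Import Reals ZArith List Lia Lra FunctionalExtensionality.
From Coquelicot Require Import Coquelicot.
Open Scope C_scope.

Lemma geom_diff_conv (u : nat -> R) (M r : R) :
  (0 <= r < 1)%R -> (forall N, Rabs (u (S N) - u N) <= M * r ^ N)%R ->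
  exists l : R, is_lim_seq u l.
Proof.
  intros Hr Hd.
  assert (Hs : ex_series (fun N => (u (S N) - u N)%R)).
  { apply (@ex_series_le R_AbsRing R_CompleteNormedModule _ (fun N => (M * r ^ N)%R)).
    - intros N. exact (Hd N).
    - apply (ex_series_scal_l M (fun N => r ^ N)%R). apply ex_series_geom.
      rewrite Rabs_pos_eq; lra. }
  destruct Hs as [Ls HS].
  exists (Ls + u O)%R.
  apply is_lim_seq_incr_1.
  assert (Hsum : forall N, sum_n (fun N => (u (S N) - u N)%R) N = (u (Datatypes.S N) - u O)%R).
  { induction N.
    - rewrite sum_O. reflexivity.
    - rewrite sum_Sn, IHN. unfold plus; simpl. ring. }
  apply is_lim_seq_ext with (fun N => (sum_n (fun N => (u (Datatypes.S N) - u N)%R) N + u O)%R).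
  { intros N. rewrite Hsum. ring. }
  apply is_lim_seq_plus'.
  - exact HS.
  - apply is_lim_seq_const.
Qed.

Lemma cprod_app l1 l2 f : cprod (l1 ++ l2) f = cprod l1 f * cprod l2 f.
Proof. induction l1; simpl. unfold Defs.C1. ring. rewrite IHl1. ring. Qed.

Lemma cprod_ext l f g : (forall i, In i l -> f i = g i) -> cprod l f = cprod l g.
Proof. induction l; simpl; intros H; auto. rewrite H, IHl; auto. Qed.

Lemma cprod_shift s N f : cprod (seq (S s) N) f = cprod (seq s N) (fun k => f (S k)).
Proof. revert s; induction N; intros s; simpl; auto. rewrite IHN. reflexivity. Qed.

Definition PP (p z : C) N := partial_prod (fun k => Defs.C1 - z * Cpow p k) N.

Lemma PP_S p z N : PP p z (S N) = PP p z N * (Defs.C1 - z * Cpow p N).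
Proof. unfold PP, partial_prod. rewrite seq_S, cprod_app. simpl. unfold Defs.C1. ring. Qed.

Lemma PP_shift p z N : PP p z (S N) = (Defs.C1 - z) * PP p (p * z) N.
Proof. unfold PP, partial_prod. simpl. rewrite cprod_shift.
  f_equal. unfold Defs.C1; ring. apply cprod_ext. intros. simpl. ring. Qed.

Lemma PP_bound p z N : (Cmod p < 1)%R ->
  (Cmod (PP p z N) <= exp (Cmod z * (1 - Cmod p ^ N) / (1 - Cmod p)))%R.
Proof.
  intros Hp. assert (H0 := Cmod_ge_0 p). assert (Hz := Cmod_ge_0 z).
  induction N.
  - unfold PP, partial_prod. simpl. unfold Defs.C1. rewrite Cmod_1.
    replace (Cmod z * (1 - 1) / (1 - Cmod p))%R with 0%R by (field; lra). rewrite exp_0. lra.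
  - rewrite PP_S, Cmod_mult.
    assert (Hf : (Cmod (Defs.C1 - z * Cpow p N) <= 1 + Cmod z * Cmod p ^ N)%R).
    { unfold Cminus. eapply Rle_trans. apply Cmod_triangle.
      unfold Defs.C1. rewrite Cmod_opp, Cmod_1, Cmod_mult, Cmod_pow. lra. }
    eapply Rle_trans. apply Rmult_le_compat; try apply Cmod_ge_0. exact IHN. exact Hf.
    eapply Rle_trans. apply Rmult_le_compat_l. left; apply exp_pos. apply exp_ineq1_le.
    rewrite <- exp_plus. apply Req_le. f_equal. simpl. field. lra.
Qed.

Lemma PP_bound' p z N : (Cmod p < 1)%R ->
  (Cmod (PP p z N) <= exp (Cmod z / (1 - Cmod p)))%R.
Proof.
  intros Hp. eapply Rle_trans. apply PP_bound; auto.
  assert (H0 := Cmod_ge_0 p). assert (Hz := Cmod_ge_0 z).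
  assert (0 <= Cmod p ^ N)%R by (apply pow_le; auto).
  match goal with |- (exp ?x <= exp ?y)%R => assert (Hxy : (x <= y)%R) end.
  2:{ destruct Hxy as [Hxy|Hxy]. left; apply exp_increasing; auto. rewrite Hxy; lra. }
  unfold Rdiv. apply Rmult_le_compat_r. left; apply Rinv_0_lt_compat; lra.
  rewrite <- (Rmult_1_r (Cmod z)) at 2. apply Rmult_le_compat_l; lra.
Qed.

Lemma PP_diff p z N : (Cmod p < 1)%R ->
  (Cmod (PP p z (S N) - PP p z N) <= (exp (Cmod z / (1 - Cmod p)) * Cmod z) * Cmod p ^ N)%R.
Proof.
  intros Hp. rewrite PP_S.
  replace (PP p z N * (Defs.C1 - z * Cpow p N) - PP p z N) with (PP p z N * (- (z * Cpow p N))) by (unfold Defs.C1; ring).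
  rewrite Cmod_mult, Cmod_opp, Cmod_mult, Cmod_pow, Rmult_assoc.
  apply Rmult_le_compat. apply Cmod_ge_0. apply Rmult_le_pos. apply Cmod_ge_0. apply pow_le, Cmod_ge_0.
  apply PP_bound'; auto. lra.
Qed.

Lemma PP_conv p z : (Cmod p < 1)%R ->
  (exists l : R, is_lim_seq (fun N => fst (PP p z N)) l) /\
  (exists l : R, is_lim_seq (fun N => snd (PP p z N)) l).
Proof.
  intros Hp. assert (H0 := Cmod_ge_0 p).
  split; apply (geom_diff_conv _ (exp (Cmod z / (1 - Cmod p)) * Cmod z) (Cmod p)); try lra;
  intros N; eapply Rle_trans; try (apply PP_diff; auto);
  eapply Rle_trans; try apply Rmax_Cmod; simpl.
  apply Rmax_l. apply Rmax_r.
Qed.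

Lemma qpoch_shift p z : (Cmod p < 1)%R ->
  qpoch_inf p z = (Defs.C1 - z) * qpoch_inf p (p * z).
Proof.
  intros Hp. destruct (PP_conv p (p * z) Hp) as [[la Ha] [lb Hb]].
  unfold qpoch_inf, inf_prod. change (partial_prod (fun k => Defs.C1 - z * Cpow p k)) with (PP p z). change (partial_prod (fun k => Defs.C1 - p * z * Cpow p k)) with (PP p (p * z)).
  rewrite (is_lim_seq_unique _ _ Ha), (is_lim_seq_unique _ _ Hb). simpl real.
  rewrite <- (Lim_seq_incr_1 (fun N => fst (PP p z N))).
  rewrite <- (Lim_seq_incr_1 (fun N => snd (PP p z N))).
  set (w := Defs.C1 - z).
  rewrite (is_lim_seq_unique (fun N => fst (PP p z (S N))) (fst w * la - snd w * lb)%R).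
  rewrite (is_lim_seq_unique (fun N => snd (PP p z (S N))) (fst w * lb + snd w * la)%R).
  reflexivity.
  - apply is_lim_seq_ext with (fun N => (fst w * snd (PP p (p*z) N) + snd w * fst (PP p (p*z) N))%R).
    intros N. rewrite PP_shift. reflexivity.
    apply is_lim_seq_plus'; [exact (is_lim_seq_scal_l _ _ _ Hb)|exact (is_lim_seq_scal_l _ _ _ Ha)].
  - apply is_lim_seq_ext with (fun N => (fst w * fst (PP p (p*z) N) - snd w * snd (PP p (p*z) N))%R).
    intros N. rewrite PP_shift. reflexivity.
    apply is_lim_seq_minus'; [exact (is_lim_seq_scal_l _ _ _ Ha)|exact (is_lim_seq_scal_l _ _ _ Hb)].
Qed.

Lemma Eth_mulp (p c : C) : (0 < Cmod p < 1)%R -> c <> 0 ->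
  Eth p (p * c) = - Eth p c / c.
Proof.
  intros [Hp0 Hp] Hc. assert (p <> 0). { intro E; rewrite E, Cmod_0 in Hp0; lra. }
  unfold Eth.
  replace (p / (p * c)) with (/ c) by (field; split; auto).
  rewrite (qpoch_shift p c Hp), (qpoch_shift p (/ c) Hp).
  replace (p * / c) with (p / c) by (unfold Cdiv; auto).
  unfold Defs.C1. field. auto.
Qed.

Lemma Eth_divp (p y : C) : (0 < Cmod p < 1)%R -> y <> 0 ->
  Eth p (y / p) = - (y / p) * Eth p y.
Proof.
  intros Hp Hy. assert (p <> 0). { intro E; rewrite E, Cmod_0 in Hp; lra. }
  assert (Hyp : y / p <> 0). { intro E. apply Hy. replace y with (y / p * p) by (field; auto). rewrite E; ring. }
  pose proof (Eth_mulp p (y / p) Hp Hyp) as E.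
  replace (p * (y / p)) with y in E by (field; auto).
  rewrite E. field. auto.
Qed.

Lemma Eth_pair (p X Y : C) : (0 < Cmod p < 1)%R -> X <> 0 -> Y <> 0 ->
  Eth p (p * X) * Eth p (Y / p) = Eth p X * Eth p Y * (Y / (X * p)).
Proof.
  intros Hp HX HY. assert (p <> 0). { intro E; rewrite E, Cmod_0 in Hp; lra. }
  rewrite Eth_mulp, Eth_divp; auto. field. auto.
Qed.

Lemma cprod_pair l (f1 f2 g1 g2 h : nat -> C) :
  (forall i, In i l -> f1 i * f2 i = g1 i * g2 i * h i) ->
  cprod l f1 * cprod l f2 = cprod l g1 * cprod l g2 * cprod l h.
Proof.
  induction l; simpl; intros H. unfold Defs.C1; ring.
  transitivity ((f1 a * f2 a) * (cprod l f1 * cprod l f2)). ring.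
  rewrite H, IHl; auto. ring.
Qed.

Lemma cprod_nz l (f : nat -> C) : (forall i, In i l -> f i <> 0) -> cprod l f <> 0.
Proof.
  induction l; simpl; intros H. unfold Defs.C1. intro E. injection E. lra.
  apply Cmult_neq_0; auto.
Qed.

Lemma cpowZ_nz (z : C) k : z <> 0 -> cpowZ z k <> 0.
Proof.
  intros Hz. destruct k; simpl. unfold Defs.C1. intro E. injection E. lra.
  apply Cpow_nz; auto.
  intro E. pose proof (Cinv_r (z ^ Pos.to_nat p) (Cpow_nz z _ Hz)) as E2.
  rewrite E, Cmult_0_r in E2. injection E2. lra.
Qed.

Lemma ellpoch_nat (q p c : C) k :
  ellpoch q p c (Z.of_nat k) = cprod (seq 0 k) (fun j => Eth p (c * Cpow q j)).
Proof.
  destruct k. reflexivity.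
  simpl. rewrite SuccNat2Pos.id_succ. reflexivity.
Qed.

Lemma ellpoch_pair (q p c d c' d' : C) k : (0 < Cmod p < 1)%R -> q <> 0 -> c <> 0 -> d <> 0 ->
  c' = p * c -> d' = d / p ->
  ellpoch q p c' (Z.of_nat k) * ellpoch q p d' (Z.of_nat k)
  = ellpoch q p c (Z.of_nat k) * ellpoch q p d (Z.of_nat k) * cprod (seq 0 k) (fun _ => d / (c * p)).
Proof.
  intros Hp Hq Hc Hd -> ->. assert (p <> 0). { intro E; rewrite E, Cmod_0 in Hp; lra. }
  rewrite !ellpoch_nat. apply cprod_pair. intros j _.
  assert (Hqj := Cpow_nz q j Hq).
  replace (p * c * Cpow q j) with (p * (c * Cpow q j)) by ring.
  replace (d / p * Cpow q j) with ((d * Cpow q j) / p) by (field; auto).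
  rewrite Eth_pair; auto. f_equal. field. repeat split; auto.
  apply Cmult_neq_0; auto. apply Cmult_neq_0; auto.
Qed.

Definition FF (l : list nat) (K : C) :=
  cprod (seq 1 (length l)) (fun i => cprod (seq 0 (part l i)) (fun _ => K)).

Lemma FF_nz l (K : C) : K <> 0 -> FF l K <> 0.
Proof. intros HK. unfold FF. apply cprod_nz. intros i _. apply cprod_nz. intros j _. exact HK. Qed.

Lemma part_pair (q p t c d c' d' : C) l : (0 < Cmod p < 1)%R -> q <> 0 -> t <> 0 -> c <> 0 -> d <> 0 ->
  c' = p * c -> d' = d / p ->
  ellpoch_part q p t c' l * ellpoch_part q p t d' l
  = ellpoch_part q p t c l * ellpoch_part q p t d l * FF l (d / (c * p)).
Proof.
  intros Hp Hq Ht Hc Hd -> ->. assert (p <> 0). { intro E; rewrite E, Cmod_0 in Hp; lra. }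
  unfold ellpoch_part, FF. apply cprod_pair. intros i _.
  set (T := cpowZ t (1 - Z.of_nat i)). assert (HT : T <> 0) by (apply cpowZ_nz; auto).
  unfold partZ.
  rewrite (ellpoch_pair q p (c * T) (d * T)); auto.
  f_equal. apply cprod_ext. intros. field. repeat split; auto.
  apply Cmult_neq_0; auto. apply Cmult_neq_0; auto. ring. field; auto.
Qed.

Lemma Cinv_0 : / (0 : C) = 0.
Proof. unfold Cinv. apply injective_projections; simpl; unfold Rdiv; ring. Qed.

Lemma Cinv_nz (z : C) : z <> 0 -> / z <> 0.
Proof. intros Hz E. pose proof (Cinv_r z Hz) as E2. rewrite E, Cmult_0_r in E2. injection E2. lra. Qed.

Lemma Cdiv_cancel (N D F : C) : F <> 0 -> (N * F) / (D * F) = N / D.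
Proof.
  intros HF. destruct (Ceq_dec D 0) as [->|HD].
  - rewrite Cmult_0_l. unfold Cdiv. rewrite Cinv_0. ring.
  - field. split; auto.
Qed.

Ltac nz := repeat (match goal with
  | |- Cmult _ _ <> _ => apply Cmult_neq_0
  | |- Cdiv _ _ <> _ => unfold Cdiv; apply Cmult_neq_0
  | |- Cinv _ <> _ => apply Cinv_nz
  end); auto.

Lemma W1_shift (q p t a b x : C) l m : (0 < Cmod p < 1)%R -> q <> 0 -> t <> 0 -> a <> 0 -> b <> 0 -> x <> 0 ->
  W1 q p t a b (p * x) l m = W1 q p t a b x l m.
Proof.
  intros Hp Hq Ht Ha Hb Hx. assert (p <> 0). { intro E; rewrite E, Cmod_0 in Hp; lra. }
  unfold W1. destruct (interlaces l m); [|reflexivity]. cbv zeta.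
  set (K := / x / (a * x * p)).
  assert (HK : K <> 0) by (unfold K; nz).
  pose proof (part_pair q p t (a * x) (/ x) (a * (p * x)) (/ (p * x)) l Hp Hq Ht) as HL1.
  pose proof (part_pair q p t (a * x) (/ x) (a * (p * x)) (/ (p * x)) m Hp Hq Ht) as HM1.
  pose proof (part_pair q p t (q * b * x / t) (q * b / (a * x * t)) (q * b * (p * x) / t) (q * b / (a * (p * x) * t)) m Hp Hq Ht) as HM2.
  pose proof (part_pair q p t (q * b * x) (q * b / (a * x)) (q * b * (p * x)) (q * b / (a * (p * x))) l Hp Hq Ht) as HL2.
  replace (/ x / (a * x * p)) with K in HL1, HM1 by reflexivity.
  replace (q * b / (a * x * t) / (q * b * x / t * p)) with K in HM2 by (unfold K; field; repeat split; auto).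
  replace (q * b / (a * x) / (q * b * x * p)) with K in HL2 by (unfold K; field; repeat split; auto).
  specialize (HL1 ltac:(nz) ltac:(nz) ltac:(ring) ltac:(field; auto)).
  specialize (HM1 ltac:(nz) ltac:(nz) ltac:(ring) ltac:(field; auto)).
  specialize (HM2 ltac:(nz) ltac:(nz) ltac:(field; auto) ltac:(field; repeat split; auto)).
  specialize (HL2 ltac:(nz) ltac:(nz) ltac:(ring) ltac:(field; repeat split; auto)).
  set (PL := ellpoch_part q p t) in *.
  match goal with |- ?H * ?N / ?D * ?R = _ =>
    assert (EN : N = (PL (/ x) l * PL (a * x) l * ellpoch_part q p t (q * b * x / t) m * ellpoch_part q p t (q * b / (a * x * t)) m) * (FF l K * FF m K));
    [| assert (ED : D = (ellpoch_part q p t (/ x) m * ellpoch_part q p t (a * x) m * PL (q * b * x) l * PL (q * b / (a * x)) l) * (FF l K * FF m K))] end.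
  - transitivity ((PL (a * (p * x)) l * PL (/ (p * x)) l) * (PL (q * b * (p * x) / t) m * PL (q * b / (a * (p * x) * t)) m)). unfold PL; ring.
    unfold PL in *. rewrite HL1, HM2. ring.
  - transitivity ((PL (a * (p * x)) m * PL (/ (p * x)) m) * (PL (q * b * (p * x)) l * PL (q * b / (a * (p * x))) l)). unfold PL; ring.
    unfold PL in *. rewrite HM1, HL2. ring.
  - rewrite EN, ED.
    match goal with |- ?H * (?N0 * ?F) / (?D0 * ?F) * ?R = ?H' * ?N1 / ?D1 * ?R' =>
      replace (H * (N0 * F) / (D0 * F)) with (H * ((N0 * F) / (D0 * F))) by (unfold Cdiv; ring);
      replace (H' * N1 / D1) with (H' * (N1 / D1)) by (unfold Cdiv; ring) end.
    rewrite Cdiv_cancel. reflexivity. apply Cmult_neq_0; apply FF_nz; auto.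
Qed.


Lemma Wskew_cons (q p t y a b : C) zs l m : zs <> nil ->
  Wskew q p t (y :: zs) a b l m =
  (let ell := Z.of_nat (length zs) in
      csum (interlacing_below l) (fun nu =>
        W1 q p t (a * cpowZ t (2 * ell)) (b * cpowZ t ell) (y * cpowZ t (- ell)) l nu
        * Wskew q p t zs a b nu m)).
Proof. destruct zs; [congruence|reflexivity]. Qed.

Lemma Wskew_shift (q p t : C) xs1 (y : C) xs2 : (0 < Cmod p < 1)%R -> q <> 0 -> t <> 0 -> y <> 0 ->
  forall (a b : C) l m, a <> 0 -> b <> 0 ->
  Wskew q p t (xs1 ++ p * y :: xs2) a b l m = Wskew q p t (xs1 ++ y :: xs2) a b l m.
Proof.
  intros Hp Hq Ht Hy. induction xs1 as [|z xs1 IH]; intros a b l m Ha Hb.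
  - destruct xs2 as [|w xs2].
    + simpl. apply W1_shift; auto.
    + simpl app. rewrite !Wskew_cons by discriminate. cbv zeta.
      f_equal. apply functional_extensionality. intros nu. f_equal.
      replace (p * y * cpowZ t (- Z.of_nat (length (w :: xs2)))) with (p * (y * cpowZ t (- Z.of_nat (length (w :: xs2))))) by ring.
      apply W1_shift; auto; nz; apply cpowZ_nz; auto.
  - simpl app. rewrite !Wskew_cons by (destruct xs1; discriminate). cbv zeta.
    rewrite !length_app. simpl length.
    f_equal. apply functional_extensionality. intros nu. f_equal. apply IH; auto.
Qed.

Lemma Cexp_add (z w : C) : Cexp (z + w) = Cexp z * Cexp w.
Proof.
  destruct z as [z1 z2], w as [w1 w2]. unfold Cexp. simpl.
  apply injective_projections; simpl; rewrite exp_plus; [rewrite cos_plus | rewrite sin_plus]; ring.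
Qed.

Lemma Cexp_nz (z : C) : Cexp z <> 0.
Proof.
  intros E. pose proof (Cexp_add z (- z)) as E2. rewrite E, Cmult_0_l in E2.
  replace (z + - z) with (RtoC 0) in E2 by ring.
  unfold Cexp in E2. simpl in E2. rewrite exp_0, cos_0 in E2. injection E2. lra.
Qed.

Lemma qpowC_shift (q : R) (v s L : C) : (0 < q < 1)%R -> s = L / RtoC (ln q) ->
  qpowC q (v + s) = Cexp L * qpowC q v.
Proof.
  intros Hq ->. unfold qpowC.
  assert (Hl : RtoC (ln q) <> 0).
  { intro E. injection E. intros. assert (ln q < 0)%R. { rewrite <- ln_1. apply ln_increasing; lra. } lra. }
  replace ((v + L / RtoC (ln q)) * RtoC (ln q)) with (v * RtoC (ln q) + L) by (field; auto).
  rewrite Cexp_add. ring.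
Qed.

Lemma xs_of_split (q : R) n (u : nat -> C) i s : (i < n)%nat ->
  xs_of q n (shift_at u i s) =
  map (fun j => qpowC q (u j)) (seq 0 i) ++ qpowC q (u i + s) :: map (fun j => qpowC q (u j)) (seq (S i) (n - S i)) /\
  xs_of q n u =
  map (fun j => qpowC q (u j)) (seq 0 i) ++ qpowC q (u i) :: map (fun j => qpowC q (u j)) (seq (S i) (n - S i)).
Proof.
  intros Hi. unfold xs_of.
  replace n with (i + S (n - S i))%nat at 1 3 by lia.
  rewrite !seq_app. simpl. rewrite !map_app. simpl. split; [|reflexivity].
  f_equal.
  - apply map_ext_in. intros j Hj. apply in_seq in Hj. unfold shift_at.
    destruct (Nat.eqb_spec j i); [lia|reflexivity].
  - unfold shift_at. rewrite Nat.eqb_refl. f_equal.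
    apply map_ext_in. intros j Hj. apply in_seq in Hj.
    destruct (Nat.eqb_spec j i); [lia|reflexivity].
Qed.

Theorem mainTheorem11 :
  forall (n : nat) (lam : list nat) (q : R) (p t a b : C) (u : nat -> C) (i : nat),
    is_partition n lam ->
    (0 < q < 1)%R ->
    (0 < Cmod p < 1)%R ->
    t <> C0 -> a <> C0 -> b <> C0 ->
    (i < n)%nat ->
    W (RtoC q) p t a b (xs_of q n (shift_at u i ((0%R, (2 * PI)%R) / RtoC (ln q)))) lam
      = W (RtoC q) p t a b (xs_of q n u) lam
    /\
    (forall L : C, Cexp L = p ->
      W (RtoC q) p t a b (xs_of q n (shift_at u i (L / RtoC (ln q)))) lam
        = W (RtoC q) p t a b (xs_of q n u) lam).
Proof.
  intros n lam q p t a b u i _ Hq Hp Ht Ha Hb Hi.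
  assert (HqC : RtoC q <> 0). { intro E. injection E. lra. }
  split.
  - destruct (xs_of_split q n u i ((0%R, (2 * PI)%R) / RtoC (ln q)) Hi) as [E1 E2].
    rewrite E1, E2. rewrite (qpowC_shift q (u i) _ (0%R, (2 * PI)%R) Hq eq_refl).
    replace (Cexp (0%R, (2 * PI)%R)) with (RtoC 1). rewrite Cmult_1_l. reflexivity.
    unfold Cexp. simpl. rewrite exp_0, cos_2PI, sin_2PI. apply injective_projections; simpl; ring.
  - intros L HL.
    destruct (xs_of_split q n u i (L / RtoC (ln q)) Hi) as [E1 E2].
    rewrite E1, E2. rewrite (qpowC_shift q (u i) _ L Hq eq_refl), HL.
    unfold W. apply Wskew_shift; auto. apply Cexp_nz.
Qed.
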